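(* For $A\in\mathrm{Sym}(3,\mathbb{C})$ let $c_3(A)$ be the cubic form $\underline{x}\mapsto\det(\underline{x}\,|\,A\underline{x}\,|\,A^2\underline{x})$ on $\mathbb{C}^3$. Then the map $c_3:\mathrm{Sym}(3,\mathbb{C})\to\mathrm{S}^3(\mathbb{C}^3)^\star$ is not identically zero, and for every $A\in\mathrm{Sym}(3,\mathbb{C})$ the cubic form $c_3(A)$ lies in the kernel of the Laplace operator $\Delta=\sum_{i=1}^3\frac{\partial^2}{\partial x_i^2}$.
   Context: $\mathrm{Sym}(3,\mathbb{C})$ is the space of complex symmetric $3\times3$ matrices; $\mathrm{S}^3(\mathbb{C}^3)^\star$ is the space of homogeneous cubic polynomials in $x_1,x_2,x_3$; $(\underline{x}\,|\,A\underline{x}\,|\,A^2\underline{x})$ is the matrix with these columns. *)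

(* Defs.v *)
(* complex numbers as R[i] for R : realType (= the complex
   numbers C when R is the real numbers), cubic forms as multivariate
   polynomials {mpoly C[3]}, partial derivatives via mpoly's mderiv. *)
From HB Require Import structures.
From mathcomp Require Import all_boot all_order all_algebra.
From mathcomp Require Import reals complex.
From mathcomp Require Import mpoly.
Set Implicit Arguments. Unset Strict Implicit. Unset Printing Implicit Defensive.
Import Order.TTheory GRing.Theory Num.Theory.
Local Open Scope ring_scope.
Local Open Scope complex_scope.

Definition symmetric_mx (K : Type) (A : 'M[K]_3) : Prop := A^T = A.

Definition xvec (K : comRingType) : 'cV[{mpoly K[3]}]_3 :=
  \col_(i < 3) 'X_i.

Definition c3 (K : comRingType) (A : 'M[K]_3) : {mpoly K[3]} :=
  let AP := map_mx (fun a : K => a%:MP) A in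
  let x := xvec K in
  \det (row_mx x (row_mx (AP *m x) ((AP *m AP) *m x))).

Definition laplacian (K : comRingType) (p : {mpoly K[3]}) : {mpoly K[3]} :=
  \sum_(i < 3) mderiv i (mderiv i p).

(* Main.v *)
Require Import Defs.
From HB Require Import structures.
From mathcomp Require Import all_boot all_order all_algebra.
From mathcomp Require Import reals complex.
From mathcomp Require Import mpoly.
From mathcomp Require Import ring.
Import GRing.Theory Num.Theory.
Local Open Scope ring_scope.
Local Open Scope complex_scope.

Lemma det3 (K : comNzRingType) (M : 'M[K]_3) : \det M =
  M 0 0 * (M 1 1 * M 2 2 - M 1 2 * M 2 1)
  - M 0 1 * (M 1 0 * M 2 2 - M 1 2 * M 2 0)
  + M 0 2 * (M 1 0 * M 2 1 - M 1 1 * M 2 0).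
Proof.
rewrite (expand_det_row _ 0) !big_ord_recl big_ord0 /cofactor.
rewrite !(expand_det_row _ 0) !big_ord_recl !big_ord0 /cofactor ?det_mx00 ?det_mx11.
rewrite !mxE.
set N := fun a b : nat => M (inord a) (inord b).
have E : forall i j : 'I_3, M i j = N i j.
  by move=> i j; rewrite /N !inord_val.
rewrite !E /= /bump /=.
rewrite !expr0 !expr1 ; ring.
Qed.

Section S.
Variable K : comNzRingType.

Lemma mderivXX (i j : 'I_3) : mderiv i ('X_j : {mpoly K[3]}) = (i == j)%:R.
Proof.
rewrite mderivX mnm1E; case: eqP => [->|ne].
  have -> : (U_(i) - U_(i) = 0)%MM.
    by apply/mnmP => k; rewrite mnmBE subnn mnm0E.
  by rewrite eqxx scale1r mpolyX0.
by rewrite scale0r eq_sym; case: eqP => // /esym.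
Qed.

Definition cA (A : 'M[K]_3) (a b : nat) : {mpoly K[3]} := (A (inord a) (inord b))%:MP.
Definition XN (n : nat) : {mpoly K[3]} := 'X_(inord n).
Definition DN (k : nat) (p : {mpoly K[3]}) := mderiv (inord k) p.

Lemma DN_D k p q : DN k (p + q) = DN k p + DN k q. Proof. exact: mderivD. Qed.
Lemma DN_B k p q : DN k (p - q) = DN k p - DN k q. Proof. exact: mderivB. Qed.
Lemma DN_M k p q : DN k (p * q) = DN k p * q + p * DN k q. Proof. exact: mderivM. Qed.
Lemma DN_N k p : DN k (- p) = - DN k p. Proof. exact: mderivN. Qed.
Lemma DN_1 k : DN k 1 = 0. Proof. by rewrite /DN -(rmorph1 (mpolyC 3 (R:=K))) mderivC. Qed.
Lemma DN_0 k : DN k 0 = 0. Proof. exact: mderiv0. Qed.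
Lemma DN_cA A k a b : DN k (cA A a b) = 0.
Proof. exact: mderivC. Qed.
Lemma DN_XN k n : (k < 3)%N -> (n < 3)%N -> DN k (XN n) = (k == n)%:R.
Proof.
move=> hk hn; rewrite /DN /XN mderivXX.
by rewrite -(inj_eq val_inj) /= !inordK.
Qed.

Lemma DN_XN00 : DN 0%N (XN 0%N) = 1. Proof. by rewrite DN_XN. Qed.
Lemma DN_XN01 : DN 0%N (XN 1%N) = 0. Proof. by rewrite DN_XN. Qed.
Lemma DN_XN02 : DN 0%N (XN 2%N) = 0. Proof. by rewrite DN_XN. Qed.
Lemma DN_XN10 : DN 1%N (XN 0%N) = 0. Proof. by rewrite DN_XN. Qed.
Lemma DN_XN11 : DN 1%N (XN 1%N) = 1. Proof. by rewrite DN_XN. Qed.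
Lemma DN_XN12 : DN 1%N (XN 2%N) = 0. Proof. by rewrite DN_XN. Qed.
Lemma DN_XN20 : DN 2%N (XN 0%N) = 0. Proof. by rewrite DN_XN. Qed.
Lemma DN_XN21 : DN 2%N (XN 1%N) = 0. Proof. by rewrite DN_XN. Qed.
Lemma DN_XN22 : DN 2%N (XN 2%N) = 1. Proof. by rewrite DN_XN. Qed.
Definition DXN := (DN_XN00, DN_XN01, DN_XN02, DN_XN10, DN_XN11, DN_XN12, DN_XN20, DN_XN21, DN_XN22).
Lemma DN_L0 M i : DN 0%N (cA M i 0%N * XN 0%N + (cA M i 1%N * XN 1%N + (cA M i 2%N * XN 2%N + 0))) = cA M i 0%N.
Proof. rewrite !(DN_D, DN_M, DN_0, DN_cA) !DXN; ring. Qed.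
Lemma DN_L1 M i : DN 1%N (cA M i 0%N * XN 0%N + (cA M i 1%N * XN 1%N + (cA M i 2%N * XN 2%N + 0))) = cA M i 1%N.
Proof. rewrite !(DN_D, DN_M, DN_0, DN_cA) !DXN; ring. Qed.
Lemma DN_L2 M i : DN 2%N (cA M i 0%N * XN 0%N + (cA M i 1%N * XN 1%N + (cA M i 2%N * XN 2%N + 0))) = cA M i 2%N.
Proof. rewrite !(DN_D, DN_M, DN_0, DN_cA) !DXN; ring. Qed.

Lemma colE0 (x y z : 'cV[{mpoly K[3]}]_3) i :
  (row_mx x (row_mx y z) : 'M_3) i 0 = x i 0.
Proof.
have -> : (0 : 'I_3) = lshift (1 + 1) (0 : 'I_1) by apply: val_inj.
exact: (row_mxEl x (row_mx y z) i 0).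
Qed.
Lemma colE1 (x y z : 'cV[{mpoly K[3]}]_3) i :
  (row_mx x (row_mx y z) : 'M_3) i 1 = y i 0.
Proof.
have -> : (1 : 'I_3) = rshift 1 (lshift 1 (0 : 'I_1)) by apply: val_inj.
exact: (etrans (row_mxEr x (row_mx y z) i _) (row_mxEl y z i 0)).
Qed.
Lemma colE2 (x y z : 'cV[{mpoly K[3]}]_3) i :
  (row_mx x (row_mx y z) : 'M_3) i 2 = z i 0.
Proof.
have -> : (2 : 'I_3) = rshift 1 (rshift 1 (0 : 'I_1)) by apply: val_inj.
exact: (etrans (row_mxEr x (row_mx y z) i _) (row_mxEr y z i 0)).
Qed.

Definition cB (A : 'M[K]_3) (a b : nat) : {mpoly K[3]} := ((A *m A) (inord a) (inord b))%:MP.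
Lemma DN_cB A k a b : DN k (cB A a b) = 0.
Proof. exact: mderivC. Qed.
Lemma cBE A a b : cB A a b = cA A a 0%N * cA A 0%N b + cA A a 1%N * cA A 1%N b + cA A a 2%N * cA A 2%N b.
Proof.
rewrite /cB /cA mxE !big_ord_recl big_ord0 addr0 !rmorphD !rmorphM /= addrA.
have e2 : (lift ord0 (lift ord0 ord0) : 'I_3) = inord 2 by apply/val_inj; rewrite /= inordK.
have e1 : (lift ord0 ord0 : 'I_3) = inord 1 by apply/val_inj; rewrite /= inordK.
have e0 : (ord0 : 'I_3) = inord 0 by apply/val_inj; rewrite /= inordK.
by rewrite e2 e1 e0.
Qed.

Lemma lap (A : 'M[K]_3) : A^T = A -> laplacian (c3 A) = 0.
Proof.
move=> sA.
rewrite /laplacian /c3 det3.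
rewrite !colE0 !colE1 !colE2.
rewrite -map_mxM.
have [B eB] : {B | A *m A = B} by exists (A *m A).
rewrite eB.
rewrite !mxE.
rewrite !big_ord_recl !big_ord0 !mxE.

have EA : forall i j : 'I_3, (A i j)%:MP = cA A i j.
  by move=> i j; rewrite /cA !inord_val.
have EB : forall i j : 'I_3, (B i j)%:MP = cA B i j.
  by move=> i j; rewrite /cA !inord_val.
have EX : forall i : 'I_3, 'X_i = XN i.
  by move=> i; rewrite /XN !inord_val.
have ED : forall i : 'I_3, mderiv i = DN i.
  by move=> i; rewrite /DN !inord_val.
rewrite /= !EA !EB !EX !ED /= /bump /=.
have h1 : (1 %% 3 = 1)%N by [].
have h2 : ((1 + 1) %% 3 = 2)%N by [].
have h3 : (1 + 1 = 2)%N by [].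
rewrite ?h1 ?h2 ?addn0 ?h2 ?h3.
rewrite !(DN_L0, DN_L1, DN_L2, DN_cA, DN_XN00, DN_XN01, DN_XN02, DN_XN10, DN_XN11, DN_XN12, DN_XN20, DN_XN21, DN_XN22, DN_D, DN_B, DN_N, DN_M, DN_0, DN_1).
have cBE' : forall a b, cA B a b = cB A a b by move=> a b; rewrite /cA /cB eB.
rewrite !cBE' !cBE.
have S : forall a b, cA A a b = cA A b a.
  by move=> a b; rewrite /cA -{1}sA mxE.
rewrite (S 1%N 0%N) (S 2%N 0%N) (S 2%N 1%N).
ring.
Qed.

Definition Adiag : 'M[K]_3 := \matrix_(i, j) if i == j then (i : nat)%:R else 0.

Lemma nz (h2 : (2 : K) != 0) : c3 Adiag != 0.
Proof.
apply/eqP => H.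
move: H; have [A eA] : {A | Adiag = A} by exists Adiag.
rewrite eA /c3 det3 !colE0 !colE1 !colE2 -map_mxM.
have [B eB] : {B | A *m A = B} by exists (A *m A).
rewrite eB !mxE !big_ord_recl !big_ord0 !mxE.
have EA : forall i j : 'I_3, (A i j)%:MP = cA A i j.
  by move=> i j; rewrite /cA !inord_val.
have EB : forall i j : 'I_3, (B i j)%:MP = cA B i j.
  by move=> i j; rewrite /cA !inord_val.
have EX : forall i : 'I_3, 'X_i = XN i.
  by move=> i; rewrite /XN !inord_val.
rewrite /= !EA !EB !EX /= /bump /=.
have h1 : (1 %% 3 = 1)%N by [].
have hh2 : ((1 + 1) %% 3 = 2)%N by [].
have h3 : (1 + 1 = 2)%N by [].
rewrite ?h1 ?hh2 ?addn0 ?hh2 ?h3 => H.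
have := congr1 (fun p => DN 0 (DN 1 (DN 2 p))) H.
rewrite /= !(DN_L0, DN_L1, DN_L2, DN_cA, DN_XN00, DN_XN01, DN_XN02, DN_XN10, DN_XN11, DN_XN12, DN_XN20, DN_XN21, DN_XN22, DN_D, DN_B, DN_N, DN_M, DN_0, DN_1).
have cBE' : forall a b, cA B a b = cB A a b by move=> a b; rewrite /cA /cB eB.
rewrite !cBE' !cBE.
have cv : forall a b, (a < 3)%N -> (b < 3)%N -> cA A a b = if a == b then a%:R else 0.
  move=> a b ha hb; rewrite /cA -eA mxE -(inj_eq val_inj) /= !inordK //.
  by case: eqP => _; rewrite ?mpolyC_nat ?rmorph0.
rewrite !cv //= => E.
have : (2 : {mpoly K[3]}) = 0 by rewrite -E; ring.
by move/eqP; rewrite -mpolyC_nat mpolyC_eq0 (negbTE h2).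
Qed.
Lemma Adiag_sym : symmetric_mx Adiag.
Proof. by apply/matrixP => i j; rewrite !mxE eq_sym; case: eqP => // ->. Qed.
End S.

Theorem proposition6p1 (R : realType) :
  (exists A : 'M[R[i]]_3, symmetric_mx A /\ c3 A != 0) /\
  (forall A : 'M[R[i]]_3, symmetric_mx A -> laplacian (c3 A) = 0).
Proof.
split.
  exists (Adiag _); split; first exact: Adiag_sym.
  by apply: nz; rewrite pnatr_eq0.
by move=> A sA; apply: lap.
Qed.
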